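(* Let $T$ be a tree with $t$ vertices, let $K>1$ and let $s$ be a positive integer. If $G$ is an $n$-vertex $K$-almost-regular $K_{s,s}$-free graph with average degree $d\ge (4Kt)^{6s}s^3$, then $G$ contains at least $n\left(\frac{d}{2K}\right)^{t-1}$ labeled induced copies of $T$.
   Context: A graph $G$ is $K$-almost-regular if $\Delta(G)\le K\delta(G)$, where $\Delta(G),\delta(G)$ are the maximum and minimum degrees. $G$ is $K_{s,s}$-free if it contains no copy of the complete bipartite graph $K_{s,s}$ as a subgraph. A labeled induced copy of $T$ in $G$ is an injective map $\varphi:V(T)\to V(G)$ such that for all distinct $u,v\in V(T)$, $\varphi(u)\varphi(v)\in E(G)$ if and only if $uv\in E(T)$. *)

(* Defs.v *)
From HB Require Import structures.
From mathcomp Require Import all_boot all_order all_algebra.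
Set Implicit Arguments. Unset Strict Implicit. Unset Printing Implicit Defensive.
Import Order.TTheory GRing.Theory Num.Theory.

Definition simple_graph (V : finType) (e : rel V) : Prop :=
  symmetric e /\ irreflexive e.

Definition deg (V : finType) (e : rel V) (x : V) : nat := #|[set y | e x y]|.

(* maximum degree (0 for the empty graph) *)
Definition maxdeg (V : finType) (e : rel V) : nat := \max_(x : V) deg e x.
(* minimum degree (the default #|V| is never attained by a vertex, since deg < #|V|) *)
Definition mindeg (V : finType) (e : rel V) : nat :=
  \big[minn/#|V|]_(x : V) deg e x.

Definition edges (V : finType) (e : rel V) : {set {set V}} :=
  [set A : {set V} | [exists u, exists v, e u v && (A == [set u; v])]].

Definition connected (V : finType) (e : rel V) : Prop :=
  forall x y : V, connect e x y.

Definition is_tree (V : finType) (e : rel V) : Prop :=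
  [/\ simple_graph e, 0 < #|V|, connected e & #|edges e| = #|V| - 1].

Definition almost_regular (R : realFieldType) (K : R) (V : finType) (e : rel V) : Prop :=
  ((maxdeg e)%:R <= K * (mindeg e)%:R)%R.

Definition Kss_free (s : nat) (V : finType) (e : rel V) : Prop :=
  ~ exists A B : {set V},
      [/\ #|A| = s, #|B| = s, [disjoint A & B] &
          forall a b, a \in A -> b \in B -> e a b].

Definition avg_deg (R : realFieldType) (V : finType) (e : rel V) : R :=
  ((2 * #|edges e|)%:R / (#|V|)%:R)%R.

Definition induced_copies (VT : finType) (eT : rel VT) (V : finType) (e : rel V)
  : {set {ffun VT -> V}} :=
  [set f : {ffun VT -> V} | injectiveb f &&
     [forall u, forall v, (u != v) ==> (e (f u) (f v) == eT u v)]].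

(* Main.v *)
Require Import Defs.
From HB Require Import structures.
From mathcomp Require Import all_boot all_order all_algebra.
From mathcomp Require Import zify ring lra.
Set Implicit Arguments. Unset Strict Implicit. Unset Printing Implicit Defensive.
Import Order.TTheory GRing.Theory Num.Theory.

Lemma card_bigcup_le (T I : finType) (P : pred I) (B : I -> {set T}) :
  #|\bigcup_(i | P i) B i| <= \sum_(i | P i) #|B i|.
Proof.
elim/big_rec2: _ => [|i n U _ leUn]; first by rewrite cards0.
by rewrite (leq_trans (leq_card_setU (B i) U).1) ?leq_add2l.
Qed.

Lemma subset_of_card (T : finType) (C : {set T}) k :
  k <= #|C| -> exists B : {set T}, [/\ B \subset C & #|B| = k].
Proof.
move=> hk; exists [set x in take k (enum C)]; split.
  by apply/subsetP=> x; rewrite inE => /mem_take; rewrite mem_enum.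
have u : uniq (take k (enum C)) by rewrite take_uniq // enum_uniq.
rewrite cardsE (card_uniqP u).
by rewrite size_take -cardE; case: ltngtP hk => //; move=> ? ?; lia.
Qed.

Section G.
Variables (V : finType) (e : rel V).
Hypothesis esym : symmetric e.
Hypothesis eirr : irreflexive e.

Definition N x := [set y | e x y].
Definition codeg x y := #|N x :&: N y|.

Lemma Kss_common s : Kss_free s e -> forall S : {set V}, #|S| = s ->
  #|[set w | S \subset N w]| < s.
Proof.
move=> hf S hS; rewrite ltnNge; apply/negP=> hC.
have [B [hBC hB]] := subset_of_card hC.
apply: hf; exists S, B; split=> //.
  rewrite -setI_eq0; apply/eqP/setP=> x; rewrite !inE.
  apply/negP=> /andP[xS xB].
  move/subsetP: hBC => /(_ x xB); rewrite inE => /subsetP /(_ x xS).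
  by rewrite inE eirr.
move=> a b aS bB; move/subsetP: hBC => /(_ b bB); rewrite inE.
by move/subsetP => /(_ a aS); rewrite inE esym.
Qed.

Lemma heavy_bound s M u : Kss_free s e ->
  #|[set w | M <= codeg u w]| * 'C(M, s) <= (s - 1) * 'C(#|N u|, s).
Proof.
move=> hf.
have step1 : #|[set w | M <= codeg u w]| * 'C(M, s) <=
   \sum_w 'C(codeg u w, s).
  rewrite -sum1_card big_distrl /=.
  rewrite [X in _ <= X](bigID (fun w => w \in [set w | M <= codeg u w])) /=.
  apply: leq_trans (leq_addr _ _).
  by apply: leq_sum => w; rewrite inE mul1n => hw; apply: leq_bin2l.
apply: leq_trans step1 _.
have e1 : forall w, 'C(codeg u w, s) =
   \sum_(S : {set V}) ((S \subset N u :&: N w) && (#|S| == s)).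
  move=> w; rewrite /codeg -cards_draws -sum1_card.
  by rewrite big_mkcond /=; apply: eq_bigr => S _; rewrite inE; case: ifP.
rewrite (eq_bigr _ (fun w _ => e1 w)) exchange_big /=.
rewrite -cards_draws -sum1_card big_distrr /= [X in _ <= X]big_mkcond /=.
apply: leq_sum => S _; rewrite inE.
case: (boolP (S \subset N u)) => hSu /=; last first.
  rewrite big1 // => w _; rewrite subsetI (negbTE hSu) //.
case: (boolP (#|S| == s)) => hs /=; last first.
  by rewrite big1 // => w _; rewrite andbF.
rewrite muln1.
have := Kss_common hf (eqP hs); rewrite -sum1_card big_mkcond /=.
set X := \sum_(_ | _) _ => hX.
have : X <= s - 1 by lia.
apply: leq_trans; rewrite /X; apply: leq_sum => w _.
by rewrite subsetI hSu /= inE andbT; case: (S \subset N w).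
Qed.

End G.
Lemma crossing (T : finType) (r : rel T) (D : {set T}) x y :
  connect r x y -> x \in D -> y \notin D ->
  exists u w, [/\ u \in D, w \notin D & r u w].
Proof.
move=> /connectP [p]; elim: p x => [|z p IH] x /=.
  by move=> _ -> hx; rewrite hx.
move=> /andP[hxz hp] hy hx hyD.
case: (boolP (z \in D)) => hz; first exact: IH hp hy hz hyD.
by exists x, z.
Qed.

Section T.
Variables (VT : finType) (eT : rel VT).
Hypothesis esym : symmetric eT.
Hypothesis eirr : irreflexive eT.

Definition edges_in (D : {set VT}) := [set A in edges eT | A \subset D].
Definition Nb (D : {set VT}) w := [set u in D | eT u w].

Inductive chain : {set VT} -> bool -> Prop :=
| chain1 r : chain [set r] true
| chainS D b w : chain D b -> w \notin D -> 0 < #|Nb D w| ->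
    chain (w |: D) (b && (#|Nb D w| <= 1)).

Lemma edges_step (D : {set VT}) (w : VT) : w \notin D ->
  #|edges_in D| + #|Nb D w| <= #|edges_in (w |: D)|.
Proof.
move=> wD.
have inj : {in Nb D w &, injective (fun u => [set u; w])}.
  move=> u v; rewrite !inE => /andP[uD _] /andP[vD _] h.
  have : u \in [set v; w] by rewrite -h !inE eqxx.
  rewrite !inE => /orP[/eqP //|/eqP uw].
  by move: wD; rewrite -uw uD.
rewrite -(card_in_imset inj) -cardsUI.
have -> : edges_in D :&: [set [set u; w] | u in Nb D w] = set0.
  apply/setP=> A; rewrite !inE; apply/negP; move=> /andP[/andP[_ AD] /imsetP[u _ hu]]; subst A.
  by move/subsetP: AD => /(_ w); rewrite !inE eqxx orbT (negbTE wD) => /(_ isT).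
rewrite cards0 addn0; apply: subset_leq_card; apply/subsetP=> A.
rewrite !inE => /orP[/andP[AE AD]|/imsetP[u]].
  rewrite AE /=; apply: subset_trans AD _; exact: subsetUr.
rewrite !inE => /andP[uD uw] ->; apply/andP; split.
  by apply/existsP; exists u; apply/existsP; exists w; rewrite uw eqxx.
by apply/subsetP=> x; rewrite !inE => /orP[/eqP->|/eqP->]; rewrite ?eqxx ?uD ?orbT.
Qed.

Lemma chain_edges (D : {set VT}) b : chain D b -> 0 < #|D| /\ #|D| - 1 + ~~ b <= #|edges_in D|.
Proof.
elim=> [r|{}D {}b w _ [D0 IH] wD nb0].
  by rewrite cards1.
have h := edges_step wD; rewrite cardsU1 wD /=; split; first by [].
move: h; set E1 := #|edges_in D|; set E2 := #|edges_in _|; set nb := #|Nb D w|.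
move: nb0 IH; rewrite -/nb -/E1.
by case: b => /=; case: (leqP nb 1) => /=; lia.
Qed.

Lemma chain_exists : connected eT -> 0 < #|VT| -> exists b, chain setT b.
Proof.
move=> hc hn.
suff : forall k, k < #|VT| -> exists D b, chain D b /\ #|D| = k.+1.
  move/(_ #|VT|.-1); rewrite prednK // leqnn => /(_ isT) [D [b [hD hk]]].
  exists b; have eD : D = setT; last by rewrite -eD.
  by apply/eqP; rewrite eqEcard subsetT cardsT hk leqnn.
elim=> [_|k IH hk].
  have [r _] : exists r : VT, true by move: hn; rewrite -cardsT card_gt0 => /set0Pn[r]; exists r.
  by exists [set r], true; split; [constructor | rewrite cards1].
have [D [b [hD hDk]]] := IH (ltnW hk).
have [y yD] : exists y, y \notin D.
  apply/existsP; rewrite -negb_forall; apply/negP=> /forallP hall.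
  have : D = setT by apply/setP=> x; rewrite inE hall.
  by move=> hD'; move: hk; rewrite -hDk hD' cardsT ltnn.
have [r rD] : exists r, r \in D by apply/set0Pn; rewrite -card_gt0 hDk.
have [u [w [uD wD uw]]] := crossing (hc r y) rD yD.
exists (w |: D), (b && (#|Nb D w| <= 1)); split.
  apply: chainS => //; apply/card_gt0P; exists u; by rewrite inE uD uw.
by rewrite cardsU1 wD hDk.
Qed.

Lemma tree_chain : is_tree eT -> chain setT true.
Proof.
case=> [[hs hi] hn hc hE].
have [b hb] := chain_exists hc hn.
have [_ h] := chain_edges hb.
have : #|edges_in setT| <= #|edges eT|.
  by apply: subset_leq_card; apply/subsetP=> A; rewrite inE => /andP[].
rewrite hE; move: h; rewrite cardsT; case: b hb => // _; lia.
Qed.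

End T.

Lemma codegC (V : finType) (e : rel V) x y : codeg e x y = codeg e y x.
Proof. by rewrite /codeg setIC. Qed.

Section C.
Variables (VT : finType) (eT : rel VT) (V : finType) (e : rel V).
Hypothesis tsym : symmetric eT.
Hypothesis esym : symmetric e.
Hypothesis eirr : irreflexive e.
Variables (x0 : V) (M Hb c : nat).
Hypothesis hHb : forall u, #|[set w | M <= codeg e u w]| <= Hb.
Hypothesis hc : forall x, c + #|VT| * (1 + M + Hb) <= #|N e x|.

Definition ok (D : {set VT}) (f : {ffun VT -> V}) :=
  [forall v, (v \notin D) ==> (f v == x0)] &&
  [forall u, forall v, [&& u \in D, v \in D & u != v] ==>
     [&& f u != f v, e (f u) (f v) == eT u v & codeg e (f u) (f v) < M]].

Definition okset D := [set f | ok D f].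

Lemma ok_base r : #|V| <= #|okset [set r]|.
Proof.
have inj : injective (fun x => [ffun v => if v == r then x else x0] : {ffun VT -> V}).
  by move=> x y /ffunP /(_ r); rewrite !ffunE eqxx.
rewrite -(card_imset _ inj); apply: subset_leq_card; apply/subsetP=> f.
case/imsetP=> x _ ->; rewrite inE; apply/andP; split.
  by apply/forallP=> v; rewrite inE ffunE; apply/implyP=> /negbTE ->.
apply/forallP=> u; apply/forallP=> v; rewrite !inE; apply/implyP.
by case/and3P=> /eqP -> /eqP ->; rewrite eqxx.
Qed.

Section Step.
Variables (D : {set VT}) (w p : VT).
Hypothesis wD : w \notin D.
Hypothesis pD : p \in D.
Hypothesis pw : eT p w.
Hypothesis uniq_p : forall u, u \in D -> eT u w -> u = p.

Definition Allowed (g : {ffun VT -> V}) := [set x | e (g p) x &&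
  [forall u, (u \in D) ==> [&& g u != x, (u != p) ==> ~~ e (g u) x & codeg e (g u) x < M]]].

Definition upd (g : {ffun VT -> V}) x : {ffun VT -> V} :=
  [ffun v => if v == w then x else g v].

Lemma allowed_big g : ok D g -> c <= #|Allowed g|.
Proof.
case/andP=> _ /forallP hg.
pose Bad u := [set g u] :|: ((if u != p then N e (g u) :&: N e (g p) else set0)
   :|: [set y | M <= codeg e (g u) y]).
have hB : forall u, u \in D -> #|Bad u| <= 1 + M + Hb.
  move=> u uD; rewrite /Bad.
  apply: leq_trans (leq_card_setU _ _).1 _; rewrite cards1 -addnA leq_add2l.
  apply: leq_trans (leq_card_setU _ _).1 _; apply: leq_add (hHb _).
  case: ifP => hup; last by rewrite cards0.
  have := hg u => /forallP /(_ p); rewrite uD pD hup /= => /and3P[_ _ h].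
  by apply: ltnW.
have sub : N e (g p) \subset Allowed g :|: \bigcup_(u in D) Bad u.
  apply/subsetP=> x; rewrite !inE => hx.
  rewrite hx /= -implyNb; apply/implyP.
  move=> /forallPn [u]; rewrite negb_imply => /andP[uD hu].
  apply/bigcupP; exists u => //.
  rewrite /Bad !inE; move: hu; rewrite !negb_and negbK.
  case/or3P=> [/eqP->||]; first by rewrite eqxx.
    rewrite negb_imply negbK => /andP[hup hux].
    by rewrite hup !inE hux hx orbT.
  by rewrite -leqNgt => ->; rewrite !orbT.
have := subset_leq_card sub => h1.
have h2 := leq_trans h1 (leq_card_setU _ _).1.
have h3 : #|\bigcup_(u in D) Bad u| <= #|VT| * (1 + M + Hb).
  apply: leq_trans (card_bigcup_le (fun u => u \in D) Bad) _.
  have hs : \sum_(u in D) #|Bad u| <= \sum_(u in D) (1 + M + Hb) by apply: leq_sum.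
  apply: leq_trans hs _; rewrite sum_nat_const leq_mul2r.
  by rewrite max_card orbT.
have := hc (g p); lia.
Qed.

Lemma upd_ok g x : ok D g -> x \in Allowed g -> ok (w |: D) (upd g x).
Proof.
case/andP=> /forallP h0 /forallP hg; rewrite inE => /andP[hpx /forallP hx].
apply/andP; split.
  apply/forallP=> v; rewrite !inE negb_or ffunE; apply/implyP=> /andP[/negbTE -> vD].
  by have := h0 v; rewrite vD.
have key : forall v, v \in D ->
   [&& x != g v, e x (g v) == eT w v & codeg e x (g v) < M].
  move=> v vD; have := hx v; rewrite vD /= => /and3P[h1 h2 h3].
  rewrite eq_sym h1 codegC h3 andbT /=.
  case: (eqVneq v p) => [->|hvp].
    by rewrite esym hpx tsym pw.
  move: h2; rewrite hvp /= esym => /negbTE ->.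
  rewrite eq_sym eqbF_neg; apply/negP => hwv.
  have := uniq_p vD; rewrite tsym hwv => /(_ isT) /eqP; by rewrite (negbTE hvp).
apply/forallP=> u; apply/forallP=> v; apply/implyP; rewrite !inE !ffunE.
case/and3P=> /orP[/eqP->|uD] /orP[/eqP->|vD] huv.
- by rewrite eqxx in huv.
- by rewrite eqxx (ifN _ _ (memPn wD v vD)); apply: key.
- rewrite eqxx (ifN _ _ (memPn wD u uD)).
  have /and3P[k1 k2 k3] := key u uD.
  by rewrite eq_sym k1 esym tsym k2 codegC k3.
- rewrite (ifN _ _ (memPn wD u uD)) (ifN _ _ (memPn wD v vD)).
  by have := hg u => /forallP /(_ v); rewrite uD vD huv.
Qed.

Lemma ok_step : c * #|okset D| <= #|okset (w |: D)|.
Proof.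
pose P := [set q : {ffun VT -> V} * V | ok D q.1 && (q.2 \in Allowed q.1)].
have eP : \sum_(g | ok D g) \sum_(x | x \in Allowed g) 1 = #|P|.
  by rewrite pair_big_dep /= -sum1_card; apply: eq_bigl => q; rewrite [RHS]inE.
have h1 : c * #|okset D| <= #|P|.
  rewrite -eP -sum1_card big_distrr /= muln1.
  rewrite (eq_bigl (fun g => ok D g)); last by move=> g; rewrite inE.
  by apply: leq_sum => g hg; rewrite sum1_card; apply: allowed_big.
apply: leq_trans h1 _.
have inj : {in P &, injective (fun q => upd q.1 q.2)}.
  move=> [g x] [g' x']; rewrite !inE /= => /andP[/andP[/forallP hg _] _]
    /andP[/andP[/forallP hg' _] _] /ffunP h.
  have := h w; rewrite !ffunE eqxx => ->; congr (_, _).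
  apply/ffunP=> v; have := h v; rewrite !ffunE.
  case: eqP => [-> _|//].
  by have := hg w; have := hg' w; rewrite wD /= => /eqP -> /eqP ->.
rewrite -(card_in_imset inj); apply: subset_leq_card; apply/subsetP=> f.
case/imsetP=> [[g x]]; rewrite inE /= => /andP[hg hx] ->.
by rewrite inE; apply: upd_ok.
Qed.

End Step.

Lemma ok_chain (D : {set VT}) b : chain eT D b -> b ->
  #|V| * c ^ (#|D| - 1) <= #|okset D|.
Proof.
move=> hch; have := chain_edges hch; elim: hch => [r _ _|{}D {}b w hch IH wD nb0 _ ].
  by rewrite cards1 subnn expn0 muln1; apply: ok_base.
case/andP=> hb hnb.
have [D0 _] := chain_edges hch.
have := IH (chain_edges hch) hb => {}IH.
have [p hp] : exists p, Nb eT D w = [set p].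
  by apply/cards1P; rewrite eqn_leq hnb nb0.
have pN : p \in Nb eT D w by rewrite hp set11.
have pD : p \in D by move: pN; rewrite inE => /andP[].
have pw : eT p w by move: pN; rewrite inE => /andP[].
have up : forall u, u \in D -> eT u w -> u = p.
  move=> u uD uw; have : u \in Nb eT D w by rewrite inE uD uw.
  by rewrite hp inE => /eqP.
have := ok_step wD pD pw up.
rewrite cardsU1 wD /= add1n subSS subn0.
have -> : c ^ #|D| = c * c ^ (#|D| - 1) by rewrite -expnS; congr (_ ^ _); lia.
rewrite mulnCA => h; apply: leq_trans h.
by rewrite leq_mul2l IH orbT.
Qed.

Lemma ok_final : #|okset setT| <= #|induced_copies eT e|.
Proof.
apply: subset_leq_card; apply/subsetP=> f; rewrite !inE => /andP[_ /forallP hf].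
apply/andP; split.
  apply/injectiveP=> u v h; apply/eqP; apply: contraT => huv.
  by have := hf u => /forallP /(_ v); rewrite !inE huv h eqxx.
apply/forallP=> u; apply/forallP=> v; apply/implyP=> huv.
by have := hf u => /forallP /(_ v); rewrite !inE huv => /and3P[].
Qed.

End C.

Section Deg.
Variables (V : finType) (e : rel V).
Hypothesis esym : symmetric e.
Hypothesis eirr : irreflexive e.

Lemma mindeg_le x : mindeg e <= deg e x.
Proof.
rewrite /mindeg.
have : x \in index_enum V by rewrite mem_index_enum.
elim: (index_enum V) => [//|y r IH]; rewrite inE big_cons.
case/orP=> [/eqP <-|/IH h]; first exact: geq_minl.
exact: leq_trans (geq_minr _ _) h.
Qed.

Lemma deg_le_max x : deg e x <= maxdeg e.
Proof. exact: leq_bigmax. Qed.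

Lemma edges_le (lt : rel V) : (forall u v, u != v -> lt u v || lt v u) ->
  #|edges e| <= #|[set q : V * V | e q.1 q.2 && lt q.1 q.2]|.
Proof.
move=> htot.
apply: leq_trans (leq_imset_card (fun q : V * V => [set q.1; q.2]) _).
apply: subset_leq_card; apply/subsetP=> A; rewrite inE.
case/existsP=> u /existsP[v /andP[huv /eqP ->]].
have nuv : u != v by apply: contraTneq huv => ->; rewrite eirr.
case/orP: (htot u v nuv) => h; apply/imsetP.
  by exists (u, v); rewrite // inE huv h.
exists (v, u); first by rewrite inE /= esym huv h.
by apply/setP=> z; rewrite !inE orbC.
Qed.

Lemma two_edges : #|edges e| * 2 <= \sum_x deg e x.
Proof.
pose P1 := [set q : V * V | e q.1 q.2 && (enum_rank q.1 < enum_rank q.2)].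
pose P2 := [set q : V * V | e q.1 q.2 && (enum_rank q.2 < enum_rank q.1)].
have h1 : #|edges e| <= #|P1|.
  apply: (@edges_le (fun u v : V => enum_rank u < enum_rank v)) => u v huv /=; rewrite -neq_ltn.
  by apply: contra huv => /eqP /val_inj /enum_rank_inj ->.
have h2 : #|edges e| <= #|P2|.
  apply: (@edges_le (fun u v : V => enum_rank v < enum_rank u)) => u v huv /=; rewrite orbC -neq_ltn.
  by apply: contra huv => /eqP /val_inj /enum_rank_inj ->.
have h3 : #|P1| + #|P2| <= #|[set q : V * V | e q.1 q.2]|.
  rewrite -cardsUI.
  have -> : P1 :&: P2 = set0.
    apply/setP=> q; rewrite !inE; apply/negP=> /andP[/andP[_ a] /andP[_ b]].
    by move: (ltn_trans a b); rewrite ltnn.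
  rewrite cards0 addn0; apply: subset_leq_card; apply/subsetP=> q.
  by rewrite !inE => /orP[/andP[->]|/andP[->]].
have h4 : #|[set q : V * V | e q.1 q.2]| = \sum_x deg e x.
  rewrite /deg; under eq_bigr => x _ do rewrite -sum1_card.
  rewrite pair_big_dep /= -sum1_card; apply: eq_bigl => q; by rewrite !inE.
rewrite -h4; apply: leq_trans h3; rewrite muln2 -addnn; exact: leq_add.
Qed.

Lemma edges_maxdeg : #|edges e| * 2 <= #|V| * maxdeg e.
Proof.
apply: leq_trans two_edges _.
have : \sum_(x : V) deg e x <= \sum_(x : V) maxdeg e by apply: leq_sum => x _; apply: deg_le_max.
by rewrite sum_nat_const.
Qed.

End Deg.

Lemma leq_pow a b k : a <= b -> a ^ k <= b ^ k.
Proof. by move=> h; elim: k => // k IH; rewrite !expnS leq_mul. Qed.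

Lemma ffact_le n m : n ^_ m <= n ^ m.
Proof.
elim: m => [|m IH]; first by rewrite ffactn0 expn0.
by rewrite ffactnSr expnSr leq_mul // leq_subr.
Qed.

Lemma ffact_ge n m : (n - m) ^ m <= n ^_ m.
Proof.
elim: m => [|m IH]; first by rewrite ffactn0 expn0.
rewrite ffactnSr expnSr leq_mul //; last by apply: leq_sub2l.
by apply: leq_trans IH; apply: leq_pow; apply: leq_sub2l.
Qed.

Lemma nat_part1 t s dl M : (0 < t)%N -> (8 * t * (s + 1) <= dl)%N -> (dl < 4 * t * (M + 1))%N ->
  [/\ (2 * s + 2 <= M)%N, (s < M)%N & (dl <= 8 * t * (M - s))%N].
Proof.
move=> t0 h1 h2.
have hMs : (2 * s + 2 <= M)%N.
  have : (4 * t * (2 * (s + 1)) < 4 * t * (M + 1))%N by lia.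
  by rewrite ltn_pmul2l; [lia | lia].
split => //; first lia.
have -> : (8 * t * (M - s) = 4 * t * M + 4 * t * (M - 2 * s))%N.
  have -> : M = (M - 2 * s) + 2 * s by lia.
  have -> : (M - 2 * s + 2 * s - s = (M - 2 * s) + s)%N by lia.
  have -> : (M - 2 * s + 2 * s - 2 * s = (M - 2 * s))%N by lia.
  set a := (M - 2 * s)%N; rewrite !mulnDr; lia.
have : (4 * t <= 4 * t * (M - 2 * s))%N by rewrite leq_pmulr //; lia.
move: h2; rewrite mulnDr muln1; lia.
Qed.
Lemma nat_part2 t dl M Hb : (M * (4 * t) <= dl)%N -> (4 * t * (1 + Hb) <= dl)%N ->
  (2 * (t * (1 + M + Hb)) <= dl)%N.
Proof. rewrite !mulnDr; lia. Qed.
Local Open Scope ring_scope.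

Lemma powle (R : realFieldType) (x y : R) n : 0 <= x -> x <= y -> x ^+ n <= y ^+ n.
Proof.
move=> hx hxy; apply: lerXn2r; rewrite ?nnegrE //; exact: le_trans hxy.
Qed.

Lemma numeric (R : realFieldType) (K d : R) (t s dl Dl Hb : nat) :
  1 < K -> (0 < t)%N -> (0 < s)%N ->
  Dl%:R <= K * dl%:R -> d <= Dl%:R ->
  (4 * K * t%:R) ^+ (6 * s) * (s%:R) ^+ 3 <= d ->
  (s < dl %/ (4 * t))%N /\
  ((Hb * (dl %/ (4 * t) - s) ^ s <= (s - 1) * Dl ^ s)%N ->
   (2 * (t * (1 + dl %/ (4 * t) + Hb)) <= dl)%N).
Proof.
move=> K1 t0 s0 hDK hdD hd.
set L := 4 * K * t%:R.
have t1 : 1 <= t%:R :> R by rewrite ler1n.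
have s1 : 1 <= s%:R :> R by rewrite ler1n.
have L4 : 4 <= L by rewrite /L; nra.
have L1 : 1 < L by lra.
set X := L ^+ (6 * s - 1).
have eL : L ^+ (6 * s) = X * L by rewrite /X -exprSr; congr (_ ^+ _); lia.
have X_L2s : L ^+ (2 * s) <= X by rewrite /X ler_eXn2l //; lia.
have X_L : L <= X by rewrite /X -{1}(expr1 L) ler_eXn2l //; lia.
have K0 : 0 < K by lra.
have hdl : X * (4 * t%:R) * s%:R ^+ 3 <= dl%:R.
  rewrite -(ler_pM2l K0).
  apply: le_trans hDK; apply: le_trans hdD; apply: le_trans hd.
  rewrite eL; suff -> : K * (X * (4 * t%:R) * s%:R ^+ 3) = X * L * s%:R ^+ 3 by [].
  by rewrite /L; ring.
have s3 : s%:R <= s%:R ^+ 3 :> R.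
  have : 1 <= s%:R ^+ 2 :> R by apply: exprn_ege1.
  rewrite exprS; nra.
have hi : (8 * t * (s + 1) <= dl)%N.
  rewrite -(ler_nat R); apply: le_trans hdl.
  rewrite !natrM natrD.
  have hs2 : 2 * s%:R ^+ 3 >= s%:R + 1 :> R by rewrite !exprS expr0; nra.
  have hX4 : 4 <= X by lra.
  have h0 : 0 <= s%:R ^+ 3 :> R by apply: exprn_ge0; lra.
  have hA : 4 * (4 * t%:R) * s%:R ^+ 3 <= X * (4 * t%:R) * s%:R ^+ 3.
    by apply: ler_wpM2r => //; apply: ler_wpM2r => //; lra.
  apply: le_trans hA; move: hs2 h0; set S3 := s%:R ^+ 3; move=> hs2 h0.
  have ht : 0 <= t%:R :> R by lra.
  nra.
set M := (dl %/ (4 * t))%N.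
have hM0 : (M * (4 * t) <= dl)%N by apply: leq_divM.
have hM1 : (dl < 4 * t * (M + 1))%N.
  have h4 : (0 < 4 * t)%N by rewrite muln_gt0.
  have := ltn_pmod dl h4; have := divn_eq dl (4 * t); rewrite -/M.
  clearbody M. move: (dl %% (4 * t))%N => r. move=> -> hr.
  rewrite mulnDr muln1 [(4 * t * M)%N]mulnC ltn_add2l //.
clearbody M.
have [hMs hsM hY] := nat_part1 t0 hi hM1.
split=> // hHb.
apply: nat_part2 hM0 _.
rewrite -(ler_nat R).
have dl0 : 0 < dl%:R :> R.
  rewrite ltr0n; apply: leq_trans hi; rewrite !muln_gt0 t0 addn1 //.
pose Y : R := dl%:R / (8 * t%:R).
have Y0 : 0 < Y by rewrite /Y divr_gt0 //; lra.
have hMY : Y <= (M - s)%:R.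
  rewrite /Y ler_pdivrMr; last by lra.
  by move: hY; rewrite -(ler_nat R) !natrM mulrC => h; apply: le_trans h _; rewrite mulrA.
have hHbR : Hb%:R * ((M - s)%:R) ^+ s <= (s - 1)%:R * Dl%:R ^+ s :> R.
  by rewrite -!natrX -!natrM ler_nat.
have hKD : Dl%:R ^+ s <= (K * dl%:R) ^+ s :> R by apply: powle.
have eKd : K * dl%:R = 2 * L * Y.
  rewrite /L /Y; field; lra.
have hs10 : 0 <= (s - 1)%:R :> R by [].
have hHbY : Hb%:R * Y ^+ s <= ((s - 1)%:R * (2 * L) ^+ s) * Y ^+ s.
  apply: le_trans (_ : Hb%:R * ((M - s)%:R) ^+ s <= _).
    by apply: ler_wpM2l => //; apply: powle => //; lra.
  apply: le_trans hHbR _; rewrite -mulrA -exprMn -eKd.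
  by apply: ler_wpM2l.
have hHb2 : Hb%:R <= (s - 1)%:R * (2 * L) ^+ s.
  by move: hHbY; rewrite ler_pM2r // exprn_gt0.
have h2L : (2 * L) ^+ s <= X.
  apply: le_trans X_L2s; rewrite mul2n -addnn exprD -exprMn.
  by apply: powle; nra.
have X1 : 1 <= X by lra.
have hHb3 : 1 + Hb%:R <= s%:R * X.
  have : (s - 1)%:R * (2 * L) ^+ s <= (s - 1)%:R * X by apply: ler_wpM2l.
  move: hHb2; rewrite natrB //; nra.
rewrite natrM natrD natrM.
apply: le_trans hdl.
have h4t : 0 <= 4 * t%:R :> R by lra.
have : s%:R * X <= s%:R ^+ 3 * X by apply: ler_wpM2r; lra.
nra.
Qed.

Lemma lemma_dc (a q : nat) : (2 * q <= a)%N -> (a <= 2 * (a - q))%N.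
Proof. lia. Qed.

Theorem theorem1p3 (R : realFieldType) (VT : finType) (eT : rel VT)
  (K : R) (s : nat) (V : finType) (e : rel V) :
  is_tree eT -> 1 < K -> (0 < s)%N ->
  simple_graph e -> almost_regular K e -> Kss_free s e ->
  (4 * K * (#|VT|)%:R) ^+ (6 * s) * (s%:R) ^+ 3 <= avg_deg R e ->
  (#|V|)%:R * (avg_deg R e / (2 * K)) ^+ (#|VT|).-1
    <= (#|induced_copies eT e|)%:R.
Proof.
move=> htree K1 s0 [esym eirr] har hkss hd.
have htree' := htree; case: htree' => [[tsym tirr] t0 _ _].
have hpos : 0 < (4 * K * (#|VT|)%:R) ^+ (6 * s) * (s%:R) ^+ 3.
  apply: mulr_gt0; apply: exprn_gt0; last by rewrite ltr0n.
  have : 0 < (#|VT|)%:R :> R by rewrite ltr0n.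
  move=> ht; apply: mulr_gt0 => //; lra.
have n0 : (0 < #|V|)%N.
  rewrite lt0n; apply/negP => /eqP n0; move: hd; rewrite /avg_deg n0 invr0 mulr0.
  by rewrite leNgt hpos.
have [x0 _] : exists x : V, true.
  by move: n0; rewrite -cardsT card_gt0 => /set0Pn[x _]; exists x.
have hdD : avg_deg R e <= (maxdeg e)%:R.
  rewrite /avg_deg ler_pdivrMr ?ltr0n // -natrM ler_nat mulnC.
  by have := edges_maxdeg esym eirr; rewrite mulnC [(#|V| * _)%N]mulnC.
have [hsM _] := @numeric R K (avg_deg R e) #|VT| s (mindeg e) (maxdeg e) 0 K1 t0 s0 har hdD hd.
set M := (mindeg e %/ (4 * #|VT|))%N.
set Hb := (((s - 1) * maxdeg e ^ s) %/ ((M - s) ^ s))%N.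
have hHbM : (Hb * (M - s) ^ s <= (s - 1) * maxdeg e ^ s)%N by apply: leq_divM.
have [_ h2] := @numeric R K (avg_deg R e) #|VT| s (mindeg e) (maxdeg e) Hb K1 t0 s0 har hdD hd.
have hc2 := h2 hHbM.
set c := (mindeg e - #|VT| * (1 + M + Hb))%N.
have hHb : forall u, (#|[set w | M <= codeg e u w]| <= Hb)%N.
  move=> u.
  have hMs0 : (0 < (M - s) ^ s)%N by rewrite expn_gt0 subn_gt0 hsM.
  rewrite leq_divRL //.
  have hb := heavy_bound esym eirr M u hkss.
  have hb2 : (#|[set w | M <= codeg e u w]| * M ^_ s <= (s - 1) * maxdeg e ^_ s)%N.
    rewrite -!bin_ffact !mulnA leq_mul2r; apply/orP; right.
    apply: leq_trans hb _; rewrite leq_mul2l; apply/orP; right.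
    by apply: leq_bin2l; apply: deg_le_max.
  apply: leq_trans (_ : _ <= #|[set w | M <= codeg e u w]| * M ^_ s)%N _.
    by rewrite leq_mul2l ffact_ge orbT.
  apply: leq_trans hb2 _; by rewrite leq_mul2l ffact_le orbT.
have hc : forall x, (c + #|VT| * (1 + M + Hb) <= #|N e x|)%N.
  move=> x; rewrite subnK; last by apply: leq_trans _ hc2; rewrite mul2n -addnn leq_addr.
  exact: mindeg_le.
have hcount := ok_chain tsym esym x0 hHb hc (tree_chain htree) isT.
have hfin : (#|okset eT e x0 M setT| <= #|induced_copies eT e|)%N by apply: ok_final.
have hcR : avg_deg R e / (2 * K) <= c%:R.
  have hdc : ((mindeg e) <= 2 * c)%N by apply: lemma_dc.
  rewrite ler_pdivrMr; last by lra.
  move: hdc; rewrite -(ler_nat R) natrM => hdc.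
  move: har; rewrite /almost_regular => har.
  have hK0 : 0 <= K by lra.
  have := ler_wpM2l hK0 hdc.
  lra.
apply: le_trans (_ : (#|V|)%:R * c%:R ^+ (#|VT|).-1 <= _).
  apply: ler_wpM2l => //; apply: powle => //.
  by rewrite /avg_deg; apply: divr_ge0; [apply: divr_ge0|lra].
rewrite -natrX -natrM ler_nat.
apply: leq_trans hfin; move: hcount; rewrite cardsT subn1; exact.
Qed.
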